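(* For a finite set $F\subseteq\mathbb N$ let $\mathbf x_F$ be the $0$-$1$ sequence with $\mathbf x_F(n)=1$ iff $n\in F$, and let $\mathbb L=\langle\mathbf x_F: F\in\mathbb N^{<\omega}\rangle$. The map $\Phi:\mathcal R\to\mathbb Z^{\mathbb L}$, $\Phi(S)=\langle S(\mathbf x_F):F\in\mathbb N^{<\omega}\rangle$, is a surjective ring homomorphism which maps $\mathcal R^+$ into $\mathbb N^{\mathbb L}$, and its kernel is the ideal $\mathfrak I_1$, which consists exactly of the series $S\in\mathcal R$ whose associated squarefree series $S'$ is $0$.
   Context: Let $\mathbb N=\{0,1,2,\dots\}$ and $\mathbb N^{<\omega}$ the set of finite subsets of $\mathbb N$. Indeterminates $t_0,t_1,\dots$; $\mathbf A$ is the set of eventually zero sequences $\mathbf a=(a_0,a_1,\dots)$ of non-negative integers; $t^{\mathbf a}=\prod_it_i^{a_i}$. $\mathcal R$ is the ring of formal series $S=\sum_{\mathbf a}n_{\mathbf a}t^{\mathbf a}$ ($n_{\mathbf a}\in\mathbb Z$) for which there are $d_n\in\mathbb N$ with $n_{\mathbf a}=0$ whenever $a_n>d_n$ for some $n$, and $b\in\mathbb N$ with $|n_{\mathbf a}|\le b(\sum_ia_i)!/\prod_ia_i!$ for all $\mathbf a$. $\mathcal R^+$ is the set of nonzero series in $\mathcal R$ with all coefficients non-negative. For a sequence $\mathbf x$ of reals, $S(\mathbf x)$ denotes the value of $S$ when $x_n$ is assigned to $t_n$. For $\mathbf a$ let $supp(\mathbf a)=\{n:a_n\ne0\}$ and $t_F=\prod_{n\in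 F}t_n$ for $F\in\mathbb N^{<\omega}$. The associated squarefree series of $S=\sum n_{\mathbf a}t^{\mathbf a}$ is $S'=\sum_{F\in\mathbb N^{<\omega}}\big(\sum_{supp(\mathbf a)=F}n_{\mathbf a}\big)t_F$. $\mathfrak I_1$ is the ideal of $\mathcal R$ generated by $\{S-S':S\in\mathcal R^+\}$. *)

(* Defs.v *)
From mathcomp Require Import all_boot all_algebra.
From mathcomp Require Import finmap multiset.
From mathcomp Require Import boolp classical_sets fsbigop.
Set Implicit Arguments. Unset Strict Implicit. Unset Printing Implicit Defensive.
Import GRing.Theory Num.Theory.
Local Open Scope ring_scope.

(* Exponent sequences a in A: eventually-zero sequences of naturals,
   i.e. finitely supported maps nat -> nat (multisets over nat);
   a n is the exponent a_n of t_n. *)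
Definition mon := multiset nat.

(* A formal series S = sum_a n_a t^a is its coefficient function. *)
Definition series := mon -> int.

Definition supp (a : mon) : {fset nat} := finsupp a.

Definition deg (a : mon) : nat := (\sum_(i <- finsupp a) a i)%N.
Definition multinom (a : mon) : nat :=
  ((deg a)`! %/ \prod_(i <- finsupp a) (a i)`!)%N.

Definition in_R (S : series) : Prop :=
  (exists d : nat -> nat, forall a : mon, (exists n, (d n < a n)%N) -> S a = 0)
  /\ (exists b : nat, forall a : mon, (absz (S a) <= b * multinom a)%N).

Definition in_Rplus (S : series) : Prop :=
  in_R S /\ (exists a, S a != 0) /\ (forall a, 0 <= S a).

Definition zeroS : series := fun _ => 0.
Definition oneS : series := fun a => (a == mset0)%:R.
Definition addS (S T : series) : series := fun a => S a + T a.
Definition subS (S T : series) : series := fun a => S a - T a.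
Definition mulS (S T : series) : series := fun a =>
  \sum_(p \in [set p : mon * mon | (p.1 `+` p.2)%mset = a]%classic) S p.1 * T p.2.

Definition montm (a : mon) (x : nat -> int) : int :=
  \prod_(n <- finsupp a) x n ^+ a n.
Definition evalS (S : series) (x : nat -> int) : int :=
  \sum_(a \in [set: mon]%classic) S a * montm a x.

Definition xF (F : {fset nat}) : nat -> int := fun n => (n \in F)%:R.

(* Phi : R -> Z^L, with L = {x_F : F finite} indexed by F *)
Definition Phi (S : series) : {fset nat} -> int := fun F => evalS S (xF F).

(* associated squarefree series S' = sum_F (sum_{supp a = F} n_a) t_F :
   the coefficient of t^a is 0 unless a = t_F (all exponents <= 1), in which
   case it is sum_{supp b = supp a} n_b. *)
Definition sqfS (S : series) : series := fun a =>
  if [forall n : supp a, a (val n) == 1%N]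
  then \sum_(b \in [set b : mon | supp b = supp a]%classic) S b
  else 0.

Definition sumS (s : seq series) : series := foldr addS zeroS s.

(* the ideal I_1 of R generated by {T - T' : T in R^+}:
   finite R-linear combinations of such generators *)
Definition in_I1 (S : series) : Prop :=
  exists s : seq (series * series),
    (forall i, (i < size s)%N -> in_R (nth (zeroS, zeroS) s i).1 /\ in_Rplus (nth (zeroS, zeroS) s i).2) /\
    S = sumS [seq mulS p.1 (subS p.2 (sqfS p.2)) | p <- s].

(* Main.v *)
Require Import Defs.
From mathcomp Require Import all_boot all_algebra.
From mathcomp Require Import finmap multiset.
From mathcomp Require Import boolp classical_sets functions cardinality fsbigop.
From mathcomp Require Import zify.
Set Implicit Arguments. Unset Strict Implicit. Unset Printing Implicit Defensive.
Import GRing.Theory Num.Theory.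
Local Open Scope ring_scope.

Ltac natify := repeat match goal with
 | |- context [ @fun_of_fsfun ?K ?V ?d ?f ?x ] =>
    let u := fresh "u" in move: (@fun_of_fsfun K V d f x : nat) => u
 end.
Ltac nlia := natify; lia.
Lemma mem_supp (a : mon) n : (n \in supp a) = (a n != 0%N).
Proof. by rewrite /supp mem_finsupp. Qed.

Lemma montm_xF (a : mon) F : montm a (xF F) = ((supp a `<=` F)%fset)%:R.
Proof.
rewrite /montm /xF; case: (boolP (supp a `<=` F)%fset) => [/fsubsetP sub|/fsubsetPn [n na nF]].
  rewrite big_seq big1 // => n na; by rewrite (sub n na) expr1n.
rewrite (bigD1_seq n) //= (negbTE nF) expr0n.
move: na; rewrite mem_supp => /negbTE ->; by rewrite mul0r.
Qed.
Lemma fsumE (T : choiceType) (A : set T) (r : seq T) (f : T -> int) :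
  uniq r -> (forall x, A x -> f x != 0 -> x \in r) ->
  \sum_(x \in A) f x = \sum_(x <- r | `[< A x >]) f x.
Proof.
move=> ur cov; rewrite (@bigfs _ _ _ _ r (fun x => `[< A x >])) //.
  apply: eq_fsbigl; apply/seteqP; split => x /=; rewrite /in_mem /= asboolE //.
move=> x /asboolP Ax xr; apply/eqP; apply: contraNT xr => /cov; exact.
Qed.

Lemma cover_fin (T : choiceType) (B : set T) : finite_set B ->
  exists r : seq T, uniq r /\ forall x, B x -> x \in r.
Proof.
move=> fB; exists (fset_set B); split; first exact: fset_uniq.
by move=> x Bx; rewrite in_fset_set // inE.
Qed.

Definition bnd (d : nat -> nat) (s : seq nat) : mon :=
  foldr (fun i (M : mon) => (msetn (d i) i `+` M)%mset) mset0 s.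
Definition below (M : mon) : set mon := [set a : mon | forall i, (a i <= M i)%N].

Lemma finite_below d s : finite_set (below (bnd d s)).
Proof.
elim: s => [|x s IH] /=.
  apply: (sub_finite_set _ (finite_set1 (mset0 : mon))) => a /= H.
  apply/msetP => i; have := H i; rewrite mset0E; nlia.
set M := bnd d s in IH *.
apply: (sub_finite_set _ (finite_image2 (fun j (b : mon) => (msetn j x `+` b)%mset)
   (finite_seq (iota 0 (d x).+1)) IH)).
move=> a /= H.
exists (a x - M x)%N.
  rewrite -[_ :: _]/(iota 0 (d x).+1) mem_iota /=; have := H x; rewrite msetE2 msetnE eqxx; nlia.
exists (a `\` msetn (a x - M x)%N x)%mset.
  move=> i; rewrite msetE2 msetnE; have := H i; rewrite msetE2 msetnE.
  by case: eqP => [->|_]; nlia.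
apply/msetP => i; rewrite !msetE2 !msetnE; case: eqP => [->|_]; nlia.
Qed.

Lemma bnd_ge d s i : i \in s -> (d i <= bnd d s i)%N.
Proof.
elim: s => //= y s IH; rewrite inE msetE2 msetnE => /orP[/eqP->|/IH]; rewrite ?eqxx; nlia.
Qed.



Definition sqset (F : {fset nat}) (S : series) : set mon :=
  [set a : mon | (supp a `<=` F)%fset /\ S a != 0].
Definition locfin (S : series) := forall F : {fset nat}, finite_set (sqset F S).

Lemma inR_bound S : in_R S -> exists d : nat -> nat,
  forall a : mon, S a != 0 -> forall n, (a n <= d n)%N.
Proof.
move=> [[d Hd] _]; exists d => a Sa n; rewrite leqNgt; apply/negP => lt.
by move: Sa; rewrite Hd ?eqxx //; exists n.
Qed.

Lemma inR_locfin S : in_R S -> locfin S.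
Proof.
move=> /inR_bound [d Hd] F; apply: (sub_finite_set _ (finite_below d F)).
move=> a [/fsubsetP sub Sa] i; case: (boolP (i \in F)) => iF.
  exact: leq_trans (Hd a Sa i) (bnd_ge d iF).
have : i \notin supp a by apply: contra iF; apply: sub.
by rewrite mem_supp negbK => /eqP ->.
Qed.

Lemma PhiE S F r : uniq r ->
  (forall a, (supp a `<=` F)%fset -> S a != 0 -> a \in r) ->
  Phi S F = \sum_(a <- r | (supp a `<=` F)%fset) S a.
Proof.
move=> ur cov; rewrite /Phi /evalS (@fsumE _ _ r) //.
  under eq_bigl do rewrite asboolT //.
  apply/esym; rewrite big_mkcond /=; apply: eq_bigr => a _.
  rewrite montm_xF; case: ifP => _; by rewrite ?mulr1 ?mulr0.
move=> a _; rewrite montm_xF; case: (boolP (supp a `<=` F)%fset) => sub; last by rewrite mulr0 eqxx.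
by rewrite mulr1; apply: cov.
Qed.

Lemma mcover1 S F : locfin S -> exists r, uniq r /\
  (forall a, (supp a `<=` F)%fset -> S a != 0 -> a \in r).
Proof.
move=> lS; have [r [ur Hr]] := cover_fin (lS F).
by exists r; split => // a ? ?; apply: Hr.
Qed.

Lemma mcover2 S T F : locfin S -> locfin T -> exists r, uniq r /\
  (forall a, (supp a `<=` F)%fset -> S a != 0 -> a \in r) /\
  (forall a, (supp a `<=` F)%fset -> T a != 0 -> a \in r).
Proof.
move=> lS lT; have : finite_set (sqset F S `|` sqset F T) by rewrite finite_setU.
move=> /cover_fin [r [ur Hr]]; exists r; split => //; split => a ? ?; apply: Hr.
  by left. by right.
Qed.

Lemma Phi_add S T F : locfin S -> locfin T -> Phi (addS S T) F = Phi S F + Phi T F.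
Proof.
move=> lS lT; have [r [ur [HS HT]]] := mcover2 F lS lT.
rewrite (PhiE ur HS) (PhiE ur HT) (@PhiE _ _ r) // ?big_split //.
move=> a sub; rewrite /addS => H; case: (eqVneq (S a) 0) => [S0|S0]; last exact: HS.
by apply: HT => //; move: H; rewrite S0 add0r.
Qed.

Lemma Phi_sub S T F : locfin S -> locfin T -> Phi (subS S T) F = Phi S F - Phi T F.
Proof.
move=> lS lT; have [r [ur [HS HT]]] := mcover2 F lS lT.
rewrite (PhiE ur HS) (PhiE ur HT) (@PhiE _ _ r) // /subS ?sumrB //.
move=> a sub H; case: (eqVneq (S a) 0) => [S0|S0]; last exact: HS.
by apply: HT => //; move: H; rewrite S0 sub0r oppr_eq0.
Qed.

Lemma supp0 F : (supp mset0 `<=` F)%fset.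
Proof. by apply/fsubsetP => n; rewrite mem_supp mset0E. Qed.

Lemma Phi_one F : Phi oneS F = 1.
Proof.
rewrite (@PhiE _ _ [:: mset0]) //.
  by rewrite big_cons big_nil supp0 /oneS eqxx addr0.
by move=> a _; rewrite /oneS inE; case: (a == mset0).
Qed.

Lemma Phi_ge0 S F : (forall a, 0 <= S a) -> 0 <= Phi S F.
Proof.
move=> H; apply: fsumr_ge0 => a _; rewrite montm_xF mulr_ge0 //.
Qed.



Lemma supp_addl (x y : mon) : (supp x `<=` supp (x `+` y)%mset)%fset.
Proof. apply/fsubsetP => n; rewrite !mem_supp msetE2; natify; lia. Qed.
Lemma supp_addr (x y : mon) : (supp y `<=` supp (x `+` y)%mset)%fset.
Proof. apply/fsubsetP => n; rewrite !mem_supp msetE2; natify; lia. Qed.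
Lemma supp_addU (x y : mon) F : (supp x `<=` F)%fset -> (supp y `<=` F)%fset ->
  (supp (x `+` y)%mset `<=` F)%fset.
Proof.
move=> /fsubsetP hx /fsubsetP hy; apply/fsubsetP => n; rewrite mem_supp msetE2 => H.
case: (eqVneq (x n) 0%N) => [h|h]; last by apply: hx; rewrite mem_supp.
apply: hy; rewrite mem_supp; move: H h; natify; lia.
Qed.

Lemma mulS_nz S T a : mulS S T a != 0 ->
  exists p : mon * mon, (p.1 `+` p.2)%mset = a /\ S p.1 != 0 /\ T p.2 != 0.
Proof.
move=> H; case: (pselect (exists p : mon * mon, (p.1 `+` p.2)%mset = a /\ S p.1 != 0 /\ T p.2 != 0)) => // nE.
exfalso; move: H; rewrite /mulS fsbig1 ?eqxx // => p /= E.
case: (eqVneq (S p.1) 0) => [->|S1]; first by rewrite mul0r.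
case: (eqVneq (T p.2) 0) => [->|T2]; first by rewrite mulr0.
by exfalso; apply: nE; exists p.
Qed.

Lemma locfin_mulS S T : locfin S -> locfin T -> locfin (mulS S T).
Proof.
move=> lS lT F; apply: (sub_finite_set _ (finite_image2 (fun x y : mon => (x `+` y)%mset) (lS F) (lT F))).
move=> a [sub /mulS_nz [[x y] /= [E [Sx Ty]]]]; exists x; last exists y => //.
  by split => //; apply: fsubset_trans sub; rewrite -E supp_addl.
by split => //; apply: fsubset_trans sub; rewrite -E supp_addr.
Qed.

Lemma cover1f S F : locfin S -> exists r, [/\ uniq r,
  (forall a, (supp a `<=` F)%fset -> S a != 0 -> a \in r) &
  (forall a, a \in r -> (supp a `<=` F)%fset)].
Proof.
move=> lS; have [r [ur Hr]] := mcover1 F lS.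
exists [seq a <- r | (supp a `<=` F)%fset]; split; first exact: filter_uniq.
  by move=> a sub Sa; rewrite mem_filter sub Hr.
by move=> a; rewrite mem_filter => /andP[].
Qed.

Lemma PhiE' S F r : uniq r ->
  (forall a, (supp a `<=` F)%fset -> S a != 0 -> a \in r) ->
  (forall a, a \in r -> (supp a `<=` F)%fset) ->
  Phi S F = \sum_(a <- r) S a.
Proof.
move=> ur cov H; rewrite (PhiE ur cov) big_seq_cond [RHS]big_seq.
by apply: eq_bigl => a; case: (boolP (a \in r)) => //= /H ->.
Qed.

Lemma sum_if_eq (T : eqType) (r : seq T) c (x : int) : uniq r -> c \in r ->
  \sum_(a <- r) (if c == a then x else 0) = x.
Proof.
elim: r => //= y r IH /andP[yr ur]; rewrite inE big_cons => /orP[/eqP E|cr].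
  rewrite -E eqxx big1_seq ?addr0 // => a /= ar; case: eqP => // ca.
  by move: yr; rewrite -E ca ar.
rewrite IH //; case: eqP => [E|]; last by rewrite add0r.
by move: yr; rewrite -E cr.
Qed.

Lemma Phi_mul S T F : locfin S -> locfin T -> Phi (mulS S T) F = Phi S F * Phi T F.
Proof.
move=> lS lT; have [rS [uS cS fS]] := cover1f F lS; have [rT [uT cT fT]] := cover1f F lT.
rewrite (PhiE' uS cS fS) (PhiE' uT cT fT).
set P := [seq (x, y) | x <- rS, y <- rT].
have uP : uniq P by apply: allpairs_uniq => // -[? ?] [? ?] _ _ [-> ->].
set r := undup [seq (p.1 `+` p.2)%mset | p <- P].
have ur : uniq r := undup_uniq _.
have Hm : forall a, (supp a `<=` F)%fset ->
    mulS S T a = \sum_(p <- P | (p.1 `+` p.2)%mset == a) S p.1 * T p.2.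
  move=> a sub; rewrite /mulS (@fsumE _ _ P) //.
    by apply: eq_bigl => p; apply/asboolP/eqP.
  move=> [x y] /= E; case: (eqVneq (S x) 0) => [->|Sx]; first by rewrite mul0r eqxx.
  case: (eqVneq (T y) 0) => [->|Ty]; first by rewrite mulr0 eqxx.
  move=> _; apply: allpairs_f.
    by apply: cS => //; apply: fsubset_trans sub; rewrite -E supp_addl.
  by apply: cT => //; apply: fsubset_trans sub; rewrite -E supp_addr.
rewrite (@PhiE _ _ r) //; last first.
  move=> a sub /mulS_nz [[x y] /= [E [Sx Ty]]]; rewrite mem_undup -E.
  apply/mapP; exists (x, y) => //; apply: allpairs_f.
    by apply: cS => //; apply: fsubset_trans sub; rewrite -E supp_addl.
  by apply: cT => //; apply: fsubset_trans sub; rewrite -E supp_addr.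
rewrite (eq_bigr _ (fun a sub => Hm a sub)).
rewrite big_mkcond /=.
under eq_bigr do rewrite big_mkcond /=.
transitivity (\sum_(i <- r) \sum_(p <- P) (if (p.1 `+` p.2)%mset == i then S p.1 * T p.2 else 0)).
  apply: eq_bigr => i _; case: ifP => // nsub; rewrite big1_seq // => p /andP[_ pP].
  case: eqP => // E; move: nsub; rewrite -E; case/allpairsP: pP => [[x y] /= [xS yT ->]].
  by rewrite (supp_addU (fS _ xS) (fT _ yT)).
rewrite exchange_big /= big_seq (eq_bigr (fun p => S p.1 * T p.2)); last first.
  move=> p pP; apply: sum_if_eq => //; rewrite mem_undup; exact: map_f pP.
rewrite -big_seq big_allpairs mulr_suml; apply: eq_bigr => x _; rewrite mulr_sumr //.
Qed.



Definition sq (G : {fset nat}) : mon := seq_mset (G : seq nat).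

Lemma sq_val G i : sq G i = (i \in G) :> nat.
Proof. by rewrite /sq mset_seqE count_uniq_mem // fset_uniq. Qed.

Lemma supp_sq G : supp (sq G) = G.
Proof. by apply/fsetP => i; rewrite mem_supp sq_val; case: (i \in G). Qed.

Lemma sqfree_eq (a : mon) : [forall n : supp a, a (val n) == 1%N] = (a == sq (supp a)).
Proof.
apply/forallP/eqP => [H|E].
  apply/msetP => i; rewrite sq_val; case: (boolP (i \in supp a)) => ia.
    by have /eqP := H [` ia]%fset.
  by move: ia; rewrite mem_supp negbK => /eqP.
by move=> [n /= nI]; rewrite {1}E sq_val nI.
Qed.

Definition gS (S : series) (G : {fset nat}) : int :=
  \sum_(b \in [set b : mon | supp b = G]%classic) S b.

Lemma sqfE S a : sqfS S a = if a == sq (supp a) then gS S (supp a) else 0.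
Proof. by rewrite /sqfS sqfree_eq. Qed.

Lemma sqf_sq S G : sqfS S (sq G) = gS S G.
Proof. by rewrite sqfE supp_sq eqxx. Qed.

Lemma locfin_sqf S : locfin (sqfS S).
Proof.
move=> F; apply: (sub_finite_set _ (finite_below (fun=> 1%N) F)).
move=> a [/fsubsetP sub]; rewrite sqfE; case: (eqVneq a (sq (supp a))) => [E _ i|_]; last by rewrite eqxx.
case: (boolP (i \in F)) => iF.
  apply: leq_trans (bnd_ge (fun=> 1%N) iF); rewrite E sq_val; by case: (_ \in _).
rewrite E sq_val; case: (boolP (i \in supp a)) => // /sub; by rewrite (negbTE iF).
Qed.

Lemma gSE S G r : uniq r -> (forall a, supp a = G -> S a != 0 -> a \in r) ->
  gS S G = \sum_(b <- r | supp b == G) S b.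
Proof.
move=> ur cov; rewrite /gS (@fsumE _ _ r) //.
by apply: eq_bigl => b; apply/asboolP/eqP.
Qed.

Lemma Phi_pow S F : locfin S -> Phi S F = \sum_(G <- fpowerset F) gS S G.
Proof.
move=> lS; have [r [ur cS fS]] := cover1f F lS.
rewrite (PhiE' ur cS fS); apply/esym; rewrite big_seq.
rewrite (eq_bigr (fun G => \sum_(b <- r | supp b == G) S b)); last first.
  move=> G; rewrite fpowersetE => GF; apply: gSE => // a E Sa.
  by apply: cS => //; rewrite E.
rewrite -big_seq; under eq_bigr do rewrite big_mkcond /=.
rewrite exchange_big /=; apply: eq_big_seq => b br.
rewrite sum_if_eq ?fset_uniq //.
by rewrite fpowersetE fS.
Qed.

Lemma gS_sqf S G : gS (sqfS S) G = gS S G.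
Proof.
rewrite (@gSE _ _ [:: sq G]) //.
  by rewrite big_cons big_nil supp_sq eqxx sqf_sq addr0.
move=> a E; rewrite sqfE; case: (eqVneq a (sq (supp a))) => [->|_]; last by rewrite eqxx.
by rewrite E inE.
Qed.

Lemma Phi_sqf S F : locfin S -> Phi (sqfS S) F = Phi S F.
Proof.
move=> lS; rewrite !Phi_pow //; last exact: locfin_sqf.
by apply: eq_bigr => G _; rewrite gS_sqf.
Qed.

Lemma gS_sub S T G : locfin S -> locfin T -> gS (subS S T) G = gS S G - gS T G.
Proof.
move=> lS lT; have [r [ur [HS HT]]] := mcover2 G lS lT.
rewrite (@gSE S _ r) ?(@gSE T _ r) ?(@gSE (subS S T) _ r) ?sumrB //.
- move=> a E H; case: (eqVneq (S a) 0) => [S0|S0]; last by apply: HS => //; rewrite E.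
  by apply: HT; [rewrite E | move: H; rewrite /subS S0 sub0r oppr_eq0].
- by move=> a E; apply: HT; rewrite E.
- by move=> a E; apply: HS; rewrite E.
Qed.

Lemma sqf_sub S T : locfin S -> locfin T -> sqfS (subS S T) = subS (sqfS S) (sqfS T).
Proof.
move=> lS lT; apply: funext => a; rewrite /subS !sqfE; case: ifP => _; last by rewrite subr0.
exact: gS_sub.
Qed.

Lemma sqf0_gS S : sqfS S = zeroS <-> forall G, gS S G = 0.
Proof.
split => [H G|H]; first by rewrite -sqf_sq H.
by apply: funext => a; rewrite sqfE H; case: ifP.
Qed.

Lemma Phi0_gS S : locfin S -> (Phi S = (fun _ => 0) <-> forall G, gS S G = 0).
Proof.
move=> lS; split => [H|H]; last first.
  by apply: funext => F; rewrite Phi_pow // big1 // => G _; rewrite H.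
have : forall n (G : {fset nat}), (#|` G| <= n)%N -> gS S G = 0.
  elim=> [|n IH] G cG.
    move: cG; rewrite leqn0 cardfs_eq0 => /eqP ->.
    have := congr1 (fun f => f (fset0 : {fset nat})) H; rewrite /= Phi_pow //.
    rewrite (bigD1_seq fset0) ?fset_uniq ?fpowersetE ?fsubset_refl //= big1_seq ?addr0 //.
    move=> K; rewrite fpowersetE fsubset0 => /andP[+ /eqP E]; by rewrite E eqxx.
  have := congr1 (fun f => f G) H; rewrite /= Phi_pow //.
  rewrite (bigD1_seq G) ?fset_uniq ?fpowersetE ?fsubset_refl //= big1_seq ?addr0 //.
  move=> K; rewrite fpowersetE fsubEproper => /andP[nKG /orP[/eqP E|]]; first by rewrite E eqxx in nKG.
  move=> /fproper_ltn_card lt; apply: IH; move: lt cG; lia.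
by move=> P G; apply: (P #|` G|).
Qed.



Lemma locfin_add S T : locfin S -> locfin T -> locfin (addS S T).
Proof.
move=> lS lT F; have fU : finite_set (sqset F S `|` sqset F T) by rewrite finite_setU.
apply: (sub_finite_set _ fU).
move=> a [sub H]; case: (eqVneq (S a) 0) => [S0|S0]; last by left.
by right; split => //; move: H; rewrite /addS S0 add0r.
Qed.

Lemma locfin_sub S T : locfin S -> locfin T -> locfin (subS S T).
Proof.
move=> lS lT F; have fU : finite_set (sqset F S `|` sqset F T) by rewrite finite_setU.
apply: (sub_finite_set _ fU).
move=> a [sub H]; case: (eqVneq (S a) 0) => [S0|S0]; last by left.
by right; split => //; move: H; rewrite /subS S0 sub0r oppr_eq0.
Qed.

Lemma locfin0 : locfin zeroS.
Proof. move=> F; apply: (sub_finite_set _ (finite_set0 mon)) => a [_]; by rewrite eqxx. Qed.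

Lemma I1_Phi0 (s : seq (series * series)) :
  (forall i, (i < size s)%N -> in_R (nth (zeroS, zeroS) s i).1 /\ in_Rplus (nth (zeroS, zeroS) s i).2) ->
  locfin (sumS [seq mulS p.1 (subS p.2 (sqfS p.2)) | p <- s]) /\
  Phi (sumS [seq mulS p.1 (subS p.2 (sqfS p.2)) | p <- s]) = (fun _ => 0).
Proof.
elim: s => [|[A B] s IH] H /=.
  split; first exact: locfin0.
  by apply: funext => F; rewrite /Phi /evalS fsbig1 // => a _; rewrite /zeroS mul0r.
have [lA lB] : locfin A /\ locfin B.
  by have [hA [hB _]] := H 0%N erefl; split; apply: inR_locfin.
have [lL PL] : locfin (sumS [seq mulS p.1 (subS p.2 (sqfS p.2)) | p <- s]) /\
  Phi (sumS [seq mulS p.1 (subS p.2 (sqfS p.2)) | p <- s]) = (fun _ => 0).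
  by apply: IH => i lt; apply: (H i.+1).
have lD : locfin (subS B (sqfS B)) by apply: locfin_sub => //; apply: locfin_sqf.
have lM : locfin (mulS A (subS B (sqfS B))) by apply: locfin_mulS.
split; first exact: locfin_add.
apply: funext => F; rewrite Phi_add // PL Phi_mul // Phi_sub //; last exact: locfin_sqf.
by rewrite Phi_sqf // subrr mulr0 addr0.
Qed.

Definition coef (c : int) : series := fun a => c * oneS a.

Lemma finsupp_mset0 : supp mset0 = fset0.
Proof. by apply/fsetP => n; rewrite mem_supp mset0E inE. Qed.

Lemma multinom0 : multinom mset0 = 1%N.
Proof.
by rewrite /multinom /deg -/(supp mset0) finsupp_mset0 big_seq_fset0 big_seq_fset0.
Qed.

Lemma inR_coef c : in_R (coef c).
Proof.
split.
  exists (fun _ => 0%N) => a [n lt]; rewrite /coef /oneS.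
  case: eqP => [E|]; last by rewrite mulr0.
  by move: lt; rewrite E mset0E.
exists (absz c) => a; rewrite /coef /oneS; case: eqP => [->|_].
  by rewrite multinom0 mulr1 muln1.
by rewrite mulr0.
Qed.

Lemma mulS_coef c X a : mulS (coef c) X a = c * X a.
Proof.
rewrite /mulS (@fsumE _ _ [:: (mset0, a)]) //.
  by rewrite big_cons big_nil asboolT /= ?mset0D // /coef /oneS eqxx mulr1 addr0.
move=> [x y] /= E; rewrite /coef /oneS; case: (eqVneq x mset0) => [Ex|]; last by rewrite mulr0 mul0r eqxx.
by move=> _; rewrite inE -E Ex mset0D.
Qed.



Lemma sqf_zero S : (forall a, S a = 0) -> sqfS S = zeroS.
Proof.
move=> H; apply/sqf0_gS => G; rewrite /gS fsbig1 // => a _; exact: H.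
Qed.

Lemma inR_dom S T : in_R S -> (forall a, `|T a| <= `|S a|) -> in_R T.
Proof.
move=> [[d Hd] [b Hb]] H; split.
  exists d => a /Hd Sa; have := H a; rewrite Sa normr0 normr_le0; by move/eqP.
exists b => a; apply: leq_trans (Hb a).
by have := H a; rewrite -!abszE lez_nat.
Qed.

Lemma sqf0_I1 S : in_R S -> sqfS S = zeroS -> in_I1 S.
Proof.
move=> RS S0.
pose P : series := fun a => if 0 <= S a then S a else 0.
pose N : series := fun a => if 0 <= S a then 0 else - S a.
have ESPN : forall a, S a = P a - N a.
  by move=> a; rewrite /P /N; case: ifP; rewrite ?subr0 ?sub0r ?opprK.
have RP : in_R P.
  by apply: (inR_dom RS) => a; rewrite /P; case: ifP; rewrite ?normr0 ?normr_ge0.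
have RN : in_R N.
  by apply: (inR_dom RS) => a; rewrite /N; case: ifP; rewrite ?normr0 ?normr_ge0 ?normrN.
have P0 : forall a, 0 <= P a by move=> a; rewrite /P; case: ifP.
have N0 : forall a, 0 <= N a.
  by move=> a; rewrite /N; case: (lerP 0 (S a)) => // h; rewrite oppr_ge0 order.Order.POrderTheory.ltW.
have lP := inR_locfin RP; have lN := inR_locfin RN.
have EPN : forall a, sqfS P a = sqfS N a.
  move=> a; apply/eqP; rewrite -subr_eq0; apply/eqP.
  have : sqfS (subS P N) a = 0.
    by rewrite (_ : subS P N = S) ?S0 //; apply: funext => b; rewrite /subS ESPN.
  by rewrite sqf_sub.
have tP : mulS (coef 1) (subS P (sqfS P)) = subS P (sqfS P).
  by apply: funext => a; rewrite mulS_coef mul1r.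
have tN : mulS (coef (-1)) (subS N (sqfS N)) = (fun a => - (N a - sqfS N a)).
  by apply: funext => a; rewrite mulS_coef mulN1r.
case: (pselect (exists a, P a != 0)) => [nzP|zP];
  case: (pselect (exists a, N a != 0)) => [nzN|zN].
- exists [:: (coef 1, P); (coef (-1), N)]; split.
    case=> [|[|//]] _ /=; split; try exact: inR_coef.
      exact: (conj RP (conj nzP P0)).
    exact: (conj RN (conj nzN N0)).
  apply: funext => a; rewrite /= tP tN /addS /subS /zeroS ESPN EPN.
  by rewrite addr0 opprB addrA subrK.
- have Nz : forall a, N a = 0.
    by move=> a; apply/eqP; apply/negPn/negP => nz; apply: zN; exists a.
  have := sqf_zero Nz => sN.
  exists [:: (coef 1, P)]; split.
    by case=> [|//] _ /=; split; [exact: inR_coef | exact: (conj RP (conj nzP P0))].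
  apply: funext => a; rewrite /= tP /addS /subS /zeroS ESPN EPN sN Nz.
  by rewrite /zeroS subr0 !addr0.
- have Pz : forall a, P a = 0.
    by move=> a; apply/eqP; apply/negPn/negP => nz; apply: zP; exists a.
  have := sqf_zero Pz => sP.
  exists [:: (coef (-1), N)]; split.
    by case=> [|//] _ /=; split; [exact: inR_coef | exact: (conj RN (conj nzN N0))].
  apply: funext => a; rewrite /= tN /addS /subS /zeroS ESPN -EPN sP Pz.
  by rewrite addr0 subr0 sub0r.
- have Nz : forall a, N a = 0.
    by move=> a; apply/eqP; apply/negPn/negP => nz; apply: zN; exists a.
  have Pz : forall a, P a = 0.
    by move=> a; apply/eqP; apply/negPn/negP => nz; apply: zP; exists a.
  exists [::]; split => //.
  by apply: funext => a; rewrite /= /zeroS ESPN Nz Pz subr0.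
Qed.



Lemma fact_add m n : (m`! * n`! <= (m + n)`!)%N.
Proof.
rewrite -(bin_fact (leq_addr n m)) addKn.
by rewrite -[X in (X <= _)%N]mul1n leq_mul2r bin_gt0 leq_addr orbT.
Qed.

Lemma prod_fact_le (s : seq nat) (f : nat -> nat) :
  (\prod_(i <- s) (f i)`! <= (\sum_(i <- s) f i)`!)%N.
Proof.
elim: s => [|x s IH]; first by rewrite !big_nil.
rewrite !big_cons; apply: leq_trans (fact_add _ _).
by rewrite leq_mul2l IH orbT.
Qed.

Lemma multinom_gt0 a : (0 < multinom a)%N.
Proof.
rewrite /multinom divn_gt0 ?prod_fact_le //.
by rewrite prodn_gt0 // => i; rewrite fact_gt0.
Qed.


Fixpoint cf (f : {fset nat} -> int) (n : nat) (G : {fset nat}) : int :=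
  if n is n'.+1 then f G - \sum_(H <- fpowerset G | H != G) cf f n' H else 0.

Definition cc (f : {fset nat} -> int) (G : {fset nat}) : int := cf f (#|` G|).+1 G.

Lemma cf_eq f n : forall m (G : {fset nat}), (#|` G| < n)%N -> (#|` G| < m)%N -> cf f n G = cf f m G.
Proof.
elim: n => [|n IH] [|m] G //= ltn ltm; congr (_ - _).
rewrite (big_seq_cond _ (cf f n)) (big_seq_cond _ (cf f m)); apply: eq_bigr => H /andP[HG nHG]; move: HG.
rewrite fpowersetE fsubEproper => /orP[/eqP E|/fproper_ltn_card lt].
  by rewrite E eqxx in nHG.
by apply: IH; apply: leq_trans lt _; rewrite -ltnS.
Qed.

Lemma cc_sum f G : \sum_(H <- fpowerset G) cc f H = f G.
Proof.
rewrite (bigD1_seq G) ?fset_uniq ?fpowersetE ?fsubset_refl //=.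
rewrite {1}/cc /= -addrA [X in _ + X](_ : _ = 0) ?addr0 //.
rewrite addrC; apply/eqP; rewrite subr_eq0; apply/eqP.
rewrite (big_seq_cond _ (cc f)) (big_seq_cond _ (cf f _)); apply: eq_bigr => H /andP[HG nHG]; move: HG.
rewrite fpowersetE fsubEproper => /orP[/eqP E|/fproper_ltn_card lt].
  by rewrite E eqxx in nHG.
by rewrite /cc; apply: cf_eq.
Qed.



Definition mx (G : {fset nat}) : nat := (\max_(i <- G) i)%N.

Lemma mx_ge G i : i \in G -> (i <= mx G)%N.
Proof. by move=> iG; rewrite /mx; apply: (leq_bigmax_seq (F := id)). Qed.

Lemma max_in (s : seq nat) : (exists i, i \in s) -> (\max_(i <- s) i)%N \in s.
Proof.
elim: s => [[i //]|x s IH] _; rewrite big_cons inE.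
case: (pselect (exists i, i \in s)) => [H|H].
  have := IH H; rewrite /maxn; case: ltnP => _ h; by rewrite ?h ?orbT ?eqxx.
have -> : s = [::] by case: s H {IH} => // y s H; exfalso; apply: H; exists y; rewrite inE eqxx.
by rewrite big_nil maxn0 eqxx.
Qed.

Lemma mx_in G i : i \in G -> mx G \in G.
Proof. by move=> iG; apply: max_in; exists i. Qed.

Definition ext (G : {fset nat}) (k : nat) : mon := (sq G `+` msetn k (mx G))%mset.

Lemma ext_val G k i : ext G k i = ((i \in G) + (i == mx G) * k)%N.
Proof. by rewrite /ext msetE2 msetnE sq_val; case: (i == mx G); rewrite /= ?mul1n ?mul0n. Qed.

Lemma supp_ext G k i0 : i0 \in G -> supp (ext G k) = G.
Proof.
move=> i0G; apply/fsetP => i; rewrite mem_supp ext_val.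
case: (boolP (i \in G)) => iG.
  by rewrite [nat_of_bool true]/= add1n.
rewrite [nat_of_bool false]/= add0n; case: (eqVneq i (mx G)) => [E|ne].
  by move: iG; rewrite E (mx_in i0G).
by rewrite [nat_of_bool false]/= mul0n.
Qed.

Lemma ext_mx G k i0 : i0 \in G -> ext G k (mx G) = k.+1.
Proof. by move=> i0G; rewrite ext_val (mx_in i0G) eqxx mul1n. Qed.

Lemma sum_iota_const n (x : int) : \sum_(k <- iota 0 n) x = x *+ n.
Proof. by have := sumr_const_nat n 0 x; rewrite /index_iota subn0. Qed.


Definition Sf (f : {fset nat} -> int) (a : mon) : int :=
  if a == mset0 then cc f fset0
  else if (a == ext (supp a) (a (mx (supp a)) - 1)%N) && (a (mx (supp a)) <= absz (cc f (supp a)))%N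
       then sgz (cc f (supp a)) else 0.

Lemma supp_eq0 (a : mon) : supp a = fset0 -> a = mset0.
Proof.
move=> E; apply/msetP => i; rewrite mset0E; apply/eqP; rewrite -[_ == _]negbK -mem_supp E.
by rewrite inE.
Qed.

Lemma gS_Sf f G : gS (Sf f) G = cc f G.
Proof.
case: (pselect (exists i, i \in G)) => [[i0 i0G]|nG].
  set n := absz (cc f G).
  have uext : injective (ext G).
    by move=> k1 k2 E; have := ext_mx k1 i0G; rewrite E (ext_mx _ i0G) => -[].
  rewrite (@gSE _ _ [seq ext G k | k <- iota 0 n]); first last.
  - move=> a E; rewrite /Sf; case: (eqVneq a mset0) => [a0|a0].
      by move: E; rewrite a0 finsupp_mset0 => E; move: i0G; rewrite -E inE.
    case: andP => [[/eqP Ea le] _|]; last by rewrite eqxx.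
    rewrite Ea E; apply: map_f; rewrite mem_iota /= add0n.
    have : mx G \in supp a by rewrite E (mx_in i0G).
    rewrite mem_supp; move: le; rewrite E -/n; natify; lia.
  - by rewrite map_inj_uniq // iota_uniq.
  rewrite big_map big_seq_cond (eq_bigr (fun _ => sgz (cc f G))); last first.
    move=> k /andP[kn _]; rewrite /Sf (supp_ext _ i0G) (ext_mx _ i0G) (negbTE (_ : ext G k != mset0)).
      rewrite subSS subn0 eqxx /= ltnNge.
      by move: kn; rewrite mem_iota add0n /= -/n ltnNge => ->.
    by apply/negP => /eqP E; have := ext_mx k i0G; rewrite E mset0E.
  rewrite -big_seq_cond (eq_bigl (fun _ => true)); last first.
    by move=> k; rewrite (supp_ext _ i0G) eqxx.
  by rewrite sum_iota_const -mulr_natr natz -intEsg.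
have G0 : G = fset0.
  by apply/fsetP => i; rewrite inE; apply/negP => iG; apply: nG; exists i.
rewrite (@gSE _ _ [:: mset0]) //.
  by rewrite big_cons big_nil finsupp_mset0 G0 eqxx /Sf eqxx addr0.
by move=> a E _; rewrite inE (supp_eq0 (etrans E G0)).
Qed.

Definition Iset (n : nat) : {fset nat} := [fset i | i in iota 0 n.+1]%fset.
Definition dS (f : {fset nat} -> int) (n : nat) : nat := (\sum_(G <- fpowerset (Iset n)) absz (cc f G)).+1.

Lemma sum_ge (s : seq {fset nat}) (F : {fset nat} -> nat) x : uniq s -> x \in s ->
  (F x <= \sum_(y <- s) F y)%N.
Proof. by move=> us xs; rewrite (bigD1_seq x) //= leq_addr. Qed.

Lemma inR_Sf f : in_R (Sf f).
Proof.
split.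
  exists (dS f) => a [n lt]; apply/eqP; apply/negPn/negP => Sa; move: lt; apply/negP; rewrite -leqNgt.
  move: Sa; rewrite /Sf; case: (eqVneq a mset0) => [->|a0]; first by rewrite mset0E.
  case: andP => [[/eqP Ea le] _|]; last by rewrite eqxx.
  rewrite Ea ext_val; case: (eqVneq n (mx (supp a))) => [E|ne].
    rewrite [nat_of_bool true]/= mul1n /dS; apply: (@leq_trans (a (mx (supp a)) - 1).+1).
      by case: (_ \in _); rewrite ?add1n ?add0n.
    rewrite ltnS; apply: (@leq_trans (absz (cc f (supp a)))); first by move: le; natify; lia.
    apply: sum_ge; first exact: fset_uniq.
    rewrite fpowersetE; apply/fsubsetP => i ia; apply/imfsetP; exists i => //; change (i \in iota 0 n.+1); rewrite mem_iota /= add0n ltnS.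
    by rewrite E mx_ge.
  rewrite [nat_of_bool false]/= mul0n addn0 /dS; by case: (_ \in _).
exists (absz (cc f fset0)).+1 => a; rewrite /Sf; case: (eqVneq a mset0) => [->|a0].
  by rewrite multinom0 muln1.
have m1 := multinom_gt0 a.
case: ifP => _; last by [].
apply: leq_trans (_ : (1 <= _)%N); last by rewrite muln_gt0 m1.
by rewrite /sgz; case: ifP => _ //; case: ifP.
Qed.

Lemma Phi_Sf f F : Phi (Sf f) F = f F.
Proof.
rewrite Phi_pow; last exact: inR_locfin (inR_Sf f).
rewrite -(cc_sum f F); apply: eq_bigr => G _; exact: gS_Sf.
Qed.


Theorem lemma2p4 :
  (* ring homomorphism on R *)
  (forall S T : series, in_R S -> in_R T ->
     Phi (addS S T) = (fun F => Phi S F + Phi T F) /\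
     Phi (mulS S T) = (fun F => Phi S F * Phi T F)) /\
  Phi oneS = (fun _ => 1) /\
  (* surjective *)
  (forall f : {fset nat} -> int, exists S : series, in_R S /\ Phi S = f) /\
  (* R^+ is mapped into N^L *)
  (forall S : series, in_Rplus S -> forall F : {fset nat}, 0 <= Phi S F) /\
  (* kernel = I_1 = {S in R : S' = 0} *)
  (forall S : series, in_R S ->
     (Phi S = (fun _ => 0) <-> in_I1 S) /\ (in_I1 S <-> sqfS S = zeroS)).
Proof.
split.
  move=> S T RS RT; have lS := inR_locfin RS; have lT := inR_locfin RT.
  by split; apply: funext => F; [exact: Phi_add | exact: Phi_mul].
split; first by apply: funext => F; exact: Phi_one.
split.
  move=> f; exists (Sf f); split; first exact: inR_Sf.
  by apply: funext => F; exact: Phi_Sf.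
split; first by move=> S [_ [_ H]] F; exact: Phi_ge0.
move=> S RS; have lS := inR_locfin RS.
have A1 : Phi S = (fun _ => 0) -> sqfS S = zeroS.
  by move=> H; apply/sqf0_gS; apply/(Phi0_gS lS).
have A2 : sqfS S = zeroS -> Phi S = (fun _ => 0).
  by move=> H; apply/(Phi0_gS lS); apply/sqf0_gS.
have B : in_I1 S -> Phi S = (fun _ => 0).
  by move=> [s [Hs E]]; rewrite E; exact: (proj2 (I1_Phi0 Hs)).
have C : sqfS S = zeroS -> in_I1 S by apply: sqf0_I1.
split; split => H.
- exact: C (A1 H).
- exact: B H.
- exact: A1 (B H).
- exact: C H.
Qed.
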